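(* Every bitopological space $(X,\tau[tt],\tau[ff])$ that is Hausdorff (i.e. whose associated $\mathbb{B}$-topological space $(X,\tau)$ is Hausdorff) is d-sober.
   Context: $\mathbb{B}=\{0,1,tt,ff\}$ is the four-element Boolean algebra with bottom $0$, top $1$, and $tt,ff$ incomparable complements; $a\to b=\neg a\vee b$. A bitopological space $(X,\tau[tt],\tau[ff])$ corresponds to the $\mathbb{B}$-topology $\tau=\{\lambda\colon X\to\mathbb{B}: \lambda[tt]\in\tau[tt],\ \lambda[ff]\in\tau[ff]\}$, where $\lambda[b]=\{x:\lambda(x)\ge b\}$. Specialization $\mathbb{B}$-order: $\Omega(\tau)(x,y)=\bigwedge_{\lambda\in\tau}(\lambda(x)\to\lambda(y))$. $(X,\tau)$ is $T_0$ if $\Omega(\tau)(x,y)=1=\Omega(\tau)(y,x)$ implies $x=y$; it is $R_1$ if $\Omega(\tau)$, viewed as a map $X\times X\to\mathbb{B}$, is a closed set of the product $\mathbb{B}$-topological space $(X,\tau)\times(X,\tau)$ (the $\mathbb{B}$-topology on $X\times X$ generated by $\{\lambda\circ\pi_1,\lambda\circ\pi_2:\lambda\in\tau\}$ together with constants; a $\mathbb{B}$-valued set $\mu$ is closed if $\neg\mu$ is open); it is Hausdorff if it is $T_0$ and $R_1$. (Equivalently, Hausdorff means: the topological space $(X,\tau[tt]\vee\tau[ff])$ is $T_0$ and both $(X,\tau[tt])$ and $(X,\tau[ff])$ are $R_1$, where a topological space is $R_1$ if any two points with distinct closures of their singletons have disjoint neighbourhoods.) A d-point of $(X,\tau[tt],\tau[ff])$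 is a pair of frame homomorphisms $p_{tt}\colon\tau[tt]\to\{0,1\}$, $p_{ff}\colon\tau[ff]\to\{0,1\}$ (preserving finite meets and arbitrary joins) such that: if $U\in\tau[tt]$, $V\in\tau[ff]$ and $U\cap V=\emptyset$ then $p_{tt}(U)=0$ or $p_{ff}(V)=0$; and if $U\cup V=X$ then $p_{tt}(U)=1$ or $p_{ff}(V)=1$. Each $x\in X$ gives the d-point $[x]$ with $[x]_{tt}(U)=1\iff x\in U$ and $[x]_{ff}(V)=1\iff x\in V$. The space is d-sober if every d-point equals $[x]$ for a unique $x\in X$. *)

(* Defs.v *)
From Stdlib Require Import Classical ClassicalDescription.

Set Implicit Arguments.

Inductive B : Type := B0 | B1 | Btt | Bff.

(* the two "coordinates" of an element: b >= tt and b >= ff *)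
Definition geTT (b : B) : bool :=
  match b with B1 | Btt => true | _ => false end.
Definition geFF (b : B) : bool :=
  match b with B1 | Bff => true | _ => false end.

Definition mkB (t f : bool) : B :=
  match t, f with
  | true, true => B1 | true, false => Btt | false, true => Bff | false, false => B0
  end.

Definition Ble (a b : B) : Prop :=
  (geTT a = true -> geTT b = true) /\ (geFF a = true -> geFF b = true).

Definition Bneg (a : B) : B := mkB (negb (geTT a)) (negb (geFF a)).
Definition Bmeet (a b : B) : B := mkB (geTT a && geTT b) (geFF a && geFF b).
Definition Bjoin (a b : B) : B := mkB (geTT a || geTT b) (geFF a || geFF b).
Definition Bimp (a b : B) : B := Bjoin (Bneg a) b.

Definition dec (P : Prop) : bool :=
  if excluded_middle_informative P then true else false.

Definition Binf (S : B -> Prop) : B :=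
  mkB (dec (forall b, S b -> geTT b = true)) (dec (forall b, S b -> geFF b = true)).
Definition Bsup (S : B -> Prop) : B :=
  mkB (dec (exists b, S b /\ geTT b = true)) (dec (exists b, S b /\ geFF b = true)).

Definition is_topology (X : Type) (T : (X -> Prop) -> Prop) : Prop :=
  T (fun _ => True) /\
  (forall U V, T U -> T V -> T (fun x => U x /\ V x)) /\
  (forall F : (X -> Prop) -> Prop, (forall U, F U -> T U) ->
     T (fun x => exists U, F U /\ U x)).

Definition level (X : Type) (l : X -> B) (b : B) : X -> Prop :=
  fun x => Ble b (l x).

(* the B-topology associated with a bitopological space (X, t1 = tau[tt], t2 = tau[ff]) *)
Definition Btop (X : Type) (t1 t2 : (X -> Prop) -> Prop) : (X -> B) -> Prop :=
  fun l => t1 (level l Btt) /\ t2 (level l Bff).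

Definition is_Btopology (Y : Type) (T : (Y -> B) -> Prop) : Prop :=
  T (fun _ => B1) /\
  (forall m n, T m -> T n -> T (fun y => Bmeet (m y) (n y))) /\
  (forall F : (Y -> B) -> Prop, (forall m, F m -> T m) ->
     T (fun y => Bsup (fun b => exists m, F m /\ b = m y))).

Definition Bgenerated (Y : Type) (S : (Y -> B) -> Prop) : (Y -> B) -> Prop :=
  fun m => forall T, is_Btopology T -> (forall n, S n -> T n) -> T m.

Definition Bprod (X : Type) (tau : (X -> B) -> Prop) : (X * X -> B) -> Prop :=
  Bgenerated (fun m =>
    (exists l, tau l /\ m = (fun p => l (fst p))) \/
    (exists l, tau l /\ m = (fun p => l (snd p))) \/
    (exists c, m = (fun _ => c))).

Definition Bclosed (Y : Type) (T : (Y -> B) -> Prop) (m : Y -> B) : Prop :=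
  T (fun y => Bneg (m y)).

Definition Omega (X : Type) (tau : (X -> B) -> Prop) (x y : X) : B :=
  Binf (fun b => exists l, tau l /\ b = Bimp (l x) (l y)).

Definition BT0 (X : Type) (tau : (X -> B) -> Prop) : Prop :=
  forall x y, Omega tau x y = B1 -> Omega tau y x = B1 -> x = y.

Definition BR1 (X : Type) (tau : (X -> B) -> Prop) : Prop :=
  Bclosed (Bprod tau) (fun p => Omega tau (fst p) (snd p)).

Definition BHausdorff (X : Type) (tau : (X -> B) -> Prop) : Prop :=
  BT0 tau /\ BR1 tau.

(* frame homomorphism tau -> {0,1}: values outside tau are irrelevant *)
Definition frame_hom (X : Type) (T : (X -> Prop) -> Prop) (p : (X -> Prop) -> bool) : Prop :=
  p (fun _ => True) = true /\
  (forall U V, T U -> T V -> p (fun x => U x /\ V x) = andb (p U) (p V)) /\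
  (forall F : (X -> Prop) -> Prop, (forall U, F U -> T U) ->
     (p (fun x => exists U, F U /\ U x) = true <-> exists U, F U /\ p U = true)).

Definition dpoint (X : Type) (t1 t2 : (X -> Prop) -> Prop)
    (ptt pff : (X -> Prop) -> bool) : Prop :=
  frame_hom t1 ptt /\ frame_hom t2 pff /\
  (forall U V, t1 U -> t2 V -> (forall x, ~ (U x /\ V x)) ->
     ptt U = false \/ pff V = false) /\
  (forall U V, t1 U -> t2 V -> (forall x, U x \/ V x) ->
     ptt U = true \/ pff V = true).

Definition dpoint_is (X : Type) (t1 t2 : (X -> Prop) -> Prop)
    (ptt pff : (X -> Prop) -> bool) (x : X) : Prop :=
  (forall U, t1 U -> (ptt U = true <-> U x)) /\
  (forall V, t2 V -> (pff V = true <-> V x)).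

Definition d_sober (X : Type) (t1 t2 : (X -> Prop) -> Prop) : Prop :=
  forall ptt pff, dpoint t1 t2 ptt pff ->
    exists x, dpoint_is t1 t2 ptt pff x /\
      forall y, dpoint_is t1 t2 ptt pff y -> y = x.

(* Main.v *)
Require Import Defs.
From Stdlib Require Import Classical ClassicalDescription FunctionalExtensionality PropExtensionality.
Set Implicit Arguments.

Lemma dec_true (P : Prop) : dec P = true <-> P.
Proof. unfold dec; destruct excluded_middle_informative; split; intros; auto; try discriminate; contradiction. Qed.

Lemma dec_false (P : Prop) : dec P = false <-> ~ P.
Proof. unfold dec; destruct excluded_middle_informative; split; intros; auto; try discriminate; contradiction. Qed.

Lemma geTT_mkB t f : geTT (mkB t f) = t.
Proof. destruct t, f; reflexivity. Qed.
Lemma geFF_mkB t f : geFF (mkB t f) = f.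
Proof. destruct t, f; reflexivity. Qed.
Lemma geTT_neg a : geTT (Bneg a) = negb (geTT a).
Proof. destruct a; reflexivity. Qed.
Lemma geFF_neg a : geFF (Bneg a) = negb (geFF a).
Proof. destruct a; reflexivity. Qed.

Lemma level_tt (X : Type) (l : X -> B) z : level l Btt z <-> geTT (l z) = true.
Proof. unfold level, Ble; simpl; split; intuition; discriminate. Qed.
Lemma level_ff (X : Type) (l : X -> B) z : level l Bff z <-> geFF (l z) = true.
Proof. unfold level, Ble; simpl; split; intuition; discriminate. Qed.

Definition Rect (X : Type) (t : (X -> Prop) -> Prop) (W : X * X -> Prop) : Prop :=
  forall p, W p -> exists A Bs, t A /\ t Bs /\ A (fst p) /\ Bs (snd p) /\
     forall a b, A a -> Bs b -> W (a, b).
Arguments Rect {X} t W.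

Definition RT (X : Type) (t1 t2 : (X -> Prop) -> Prop) (m : X * X -> B) : Prop :=
  @Rect X t1 (fun p => geTT (m p) = true) /\ @Rect X t2 (fun p => geFF (m p) = true).
Arguments RT {X} t1 t2 m.

Lemma Rect_full (X : Type) (t : (X -> Prop) -> Prop) W :
  is_topology t -> (forall p, W p) -> Rect t W.
Proof.
  intros [Ht _] HW p _. exists (fun _ => True), (fun _ => True). repeat split; auto.
Qed.

Lemma RT_top (X : Type) (t1 t2 : (X -> Prop) -> Prop) :
  is_topology t1 -> is_topology t2 -> is_Btopology (RT t1 t2).
Proof.
  intros H1 H2. split; [|split].
  - split; apply Rect_full; auto.
  - intros m n [Hm1 Hm2] [Hn1 Hn2]. split.
    + intros p Hp. unfold Bmeet in Hp. rewrite geTT_mkB in Hp.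
      apply andb_prop in Hp as [Ha Hb].
      destruct (Hm1 p Ha) as (A & C & HA & HC & HAp & HCp & Hr).
      destruct (Hn1 p Hb) as (A' & C' & HA' & HC' & HAp' & HCp' & Hr').
      exists (fun x => A x /\ A' x), (fun x => C x /\ C' x).
      destruct H1 as [_ [Hi _]].
      repeat split; auto. intros a b [] []. unfold Bmeet. rewrite geTT_mkB.
      rewrite (Hr a b), (Hr' a b); auto.
    + intros p Hp. unfold Bmeet in Hp. rewrite geFF_mkB in Hp.
      apply andb_prop in Hp as [Ha Hb].
      destruct (Hm2 p Ha) as (A & C & HA & HC & HAp & HCp & Hr).
      destruct (Hn2 p Hb) as (A' & C' & HA' & HC' & HAp' & HCp' & Hr').
      exists (fun x => A x /\ A' x), (fun x => C x /\ C' x).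
      destruct H2 as [_ [Hi _]].
      repeat split; auto. intros a b [] []. unfold Bmeet. rewrite geFF_mkB.
      rewrite (Hr a b), (Hr' a b); auto.
  - intros F HF. split.
    + intros p Hp. unfold Bsup in Hp. rewrite geTT_mkB, dec_true in Hp.
      destruct Hp as (b & (m & Fm & ->) & Hb).
      destruct (proj1 (HF m Fm) p Hb) as (A & C & HA & HC & HAp & HCp & Hr).
      exists A, C. repeat split; auto. intros a c Ha Hc.
      unfold Bsup. rewrite geTT_mkB, dec_true. exists (m (a, c)). split; eauto.
    + intros p Hp. unfold Bsup in Hp. rewrite geFF_mkB, dec_true in Hp.
      destruct Hp as (b & (m & Fm & ->) & Hb).
      destruct (proj2 (HF m Fm) p Hb) as (A & C & HA & HC & HAp & HCp & Hr).
      exists A, C. repeat split; auto. intros a c Ha Hc.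
      unfold Bsup. rewrite geFF_mkB, dec_true. exists (m (a, c)). split; eauto.
Qed.


Lemma R1_RT (X : Type) (t1 t2 : (X -> Prop) -> Prop) :
  is_topology t1 -> is_topology t2 -> BR1 (Btop t1 t2) ->
  RT t1 t2 (fun p => Bneg (Omega (Btop t1 t2) (fst p) (snd p))).
Proof.
  intros H1 H2 HR. apply HR. apply RT_top; auto.
  intros n [(l & [Hl1 Hl2] & ->) | [(l & [Hl1 Hl2] & ->) | (c & ->)]].
  - split.
    + intros p Hp. exists (level l Btt), (fun _ => True).
      destruct H1 as [Hf _]. split; [|split; [|split; [|split]]]; auto.
      apply level_tt; auto. intros a b Ha _. apply level_tt in Ha; exact Ha.
    + intros p Hp. exists (level l Bff), (fun _ => True).
      destruct H2 as [Hf _]. split; [|split; [|split; [|split]]]; auto.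
      apply level_ff; auto. intros a b Ha _. apply level_ff in Ha; exact Ha.
  - split.
    + intros p Hp. exists (fun _ => True), (level l Btt).
      destruct H1 as [Hf _]. split; [|split; [|split; [|split]]]; auto.
      apply level_tt; auto. intros a b _ Hb. apply level_tt in Hb; exact Hb.
    + intros p Hp. exists (fun _ => True), (level l Bff).
      destruct H2 as [Hf _]. split; [|split; [|split; [|split]]]; auto.
      apply level_ff; auto. intros a b _ Hb. apply level_ff in Hb; exact Hb.
  - split.
    + intros p Hp. exists (fun _ => True), (fun _ => True).
      destruct H1 as [Hf _]. split; [|split; [|split; [|split]]]; auto.
    + intros p Hp. exists (fun _ => True), (fun _ => True).
      destruct H2 as [Hf _]. split; [|split; [|split; [|split]]]; auto.
Qed.

Lemma Omega_refl_tt (X : Type) (tau : (X -> B) -> Prop) z :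
  geTT (Omega tau z z) = true.
Proof.
  unfold Omega, Binf. rewrite geTT_mkB, dec_true.
  intros b (l & _ & ->). unfold Bimp, Bjoin, Bneg. rewrite geTT_mkB, geTT_mkB.
  destruct (geTT (l z)); reflexivity.
Qed.
Lemma Omega_refl_ff (X : Type) (tau : (X -> B) -> Prop) z :
  geFF (Omega tau z z) = true.
Proof.
  unfold Omega, Binf. rewrite geFF_mkB, dec_true.
  intros b (l & _ & ->). unfold Bimp, Bjoin, Bneg. rewrite geFF_mkB, geFF_mkB.
  destruct (geFF (l z)); reflexivity.
Qed.

Definition Sep (X : Type) (t : (X -> Prop) -> Prop) : Prop :=
  forall U y x, t U -> U y -> ~ U x -> exists A C, t A /\ t C /\ A y /\ C x /\
     forall z, ~ (A z /\ C z).
Arguments Sep {X} t.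

Lemma sep1 (X : Type) (t1 t2 : (X -> Prop) -> Prop) :
  is_topology t1 -> is_topology t2 -> BR1 (Btop t1 t2) -> Sep t1.
Proof.
  intros H1 H2 HR. destruct (R1_RT H1 H2 HR) as [R _].
  intros U y x HU Uy Ux.
  set (l := fun z => mkB (dec (U z)) true).
  assert (Hl : Btop t1 t2 l).
  { split.
    - replace (level l Btt) with U; auto.
      apply functional_extensionality; intro z; apply propositional_extensionality.
      rewrite level_tt. unfold l. rewrite geTT_mkB, dec_true. tauto.
    - replace (level l Bff) with (fun _ : X => True). apply H2.
      apply functional_extensionality; intro z; apply propositional_extensionality.
      rewrite level_ff. unfold l. rewrite geFF_mkB. tauto. }
  assert (Hp : geTT (Bneg (Omega (Btop t1 t2) y x)) = true).
  { rewrite geTT_neg. unfold Omega, Binf. rewrite geTT_mkB.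
    assert (E : dec (forall b : B, (exists l0, Btop t1 t2 l0 /\ b = Bimp (l0 y) (l0 x)) -> geTT b = true) = false).
    { apply dec_false. intro H. specialize (H _ (ex_intro _ l (conj Hl eq_refl))).
      unfold Bimp, Bjoin, Bneg, l in H. rewrite !geTT_mkB in H.
      assert (dec (U y) = true) by (apply dec_true; auto).
      assert (dec (U x) = false) by (apply dec_false; auto).
      rewrite H0, H3 in H. discriminate. }
    rewrite E. reflexivity. }
  destruct (R (y, x) Hp) as (A & C & HA & HC & Ay & Cx & Hr).
  exists A, C. repeat split; auto. intros z [Az Cz].
  specialize (Hr z z Az Cz). simpl in Hr. rewrite geTT_neg, Omega_refl_tt in Hr.
  discriminate.
Qed.

Lemma sep2 (X : Type) (t1 t2 : (X -> Prop) -> Prop) :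
  is_topology t1 -> is_topology t2 -> BR1 (Btop t1 t2) -> Sep t2.
Proof.
  intros H1 H2 HR. destruct (R1_RT H1 H2 HR) as [_ R].
  intros U y x HU Uy Ux.
  set (l := fun z => mkB true (dec (U z))).
  assert (Hl : Btop t1 t2 l).
  { split.
    - replace (level l Btt) with (fun _ : X => True). apply H1.
      apply functional_extensionality; intro z; apply propositional_extensionality.
      rewrite level_tt. unfold l. rewrite geTT_mkB. tauto.
    - replace (level l Bff) with U; auto.
      apply functional_extensionality; intro z; apply propositional_extensionality.
      rewrite level_ff. unfold l. rewrite geFF_mkB, dec_true. tauto. }
  assert (Hp : geFF (Bneg (Omega (Btop t1 t2) y x)) = true).
  { rewrite geFF_neg. unfold Omega, Binf. rewrite geFF_mkB.
    assert (E : dec (forall b : B, (exists l0, Btop t1 t2 l0 /\ b = Bimp (l0 y) (l0 x)) -> geFF b = true) = false).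
    { apply dec_false. intro H. specialize (H _ (ex_intro _ l (conj Hl eq_refl))).
      unfold Bimp, Bjoin, Bneg, l in H. rewrite !geFF_mkB in H.
      assert (dec (U y) = true) by (apply dec_true; auto).
      assert (dec (U x) = false) by (apply dec_false; auto).
      rewrite H0, H3 in H. discriminate. }
    rewrite E. reflexivity. }
  destruct (R (y, x) Hp) as (A & C & HA & HC & Ay & Cx & Hr).
  exists A, C. repeat split; auto. intros z [Az Cz].
  specialize (Hr z z Az Cz). simpl in Hr. rewrite geFF_neg, Omega_refl_ff in Hr.
  discriminate.
Qed.

Definition Wof (X : Type) (t : (X -> Prop) -> Prop) (p : (X -> Prop) -> bool) : X -> Prop :=
  fun z => exists U, (t U /\ p U = false) /\ U z.
Arguments Wof {X} t p z.

Lemma W_open (X : Type) (t : (X -> Prop) -> Prop) p :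
  is_topology t -> t (Wof t p).
Proof. intros [_ [_ Hu]]. apply Hu. intros U [HU _]; auto. Qed.

Lemma W_false (X : Type) (t : (X -> Prop) -> Prop) p :
  frame_hom t p -> p (Wof t p) = false.
Proof.
  intros [_ [_ Hu]]. destruct (p (Wof t p)) eqn:E; auto.
  apply (Hu (fun U => t U /\ p U = false)) in E.
  - destruct E as (U & [_ HU] & HU'). congruence.
  - intros U []; auto.
Qed.

Lemma key (X : Type) (t : (X -> Prop) -> Prop) p x :
  is_topology t -> frame_hom t p -> Sep t -> ~ Wof t p x ->
  forall U, t U -> (p U = true <-> U x).
Proof.
  intros Ht Hp Hs Hx U HU. split.
  - intro pU. apply NNPP. intro Ux.
    assert (Sub : forall y, U y -> Wof t p y).
    { intros y Uy. destruct (Hs U y x HU Uy Ux) as (A & C & HA & HC & Ay & Cx & Hd).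
      exists A. repeat split; auto.
      assert (pC : p C = true).
      { destruct (p C) eqn:E; auto. exfalso. apply Hx. exists C; auto. }
      destruct Hp as [_ [Hm Hu]].
      assert (E0 : (fun z => A z /\ C z) = (fun z => exists V, (fun _ : X -> Prop => False) V /\ V z)).
      { apply functional_extensionality; intro z; apply propositional_extensionality.
        split. intro H; exfalso; apply (Hd z H). intros (V & [] & _). }
      assert (E1 : p (fun z => A z /\ C z) = false).
      { rewrite E0. destruct (p (fun z => exists V, (fun _ : X -> Prop => False) V /\ V z)) eqn:E; auto.
        apply (proj1 (Hu (fun _ : X -> Prop => False) (fun V (F : False) => match F with end))) in E. destruct E as (V & [] & _). }
      rewrite (Hm A C HA HC), pC in E1. destruct (p A); auto. }
    pose proof (W_false Hp) as WF. destruct Hp as [_ [Hm _]].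
    assert (E0 : (fun z => U z /\ Wof t p z) = U).
    { apply functional_extensionality; intro z; apply propositional_extensionality.
      split. tauto. auto. }
    pose proof (Hm U (Wof t p) HU (W_open p Ht)) as E.
    rewrite E0, WF in E. rewrite pU in E. discriminate.
  - intro Ux. destruct (p U) eqn:E; auto. exfalso. apply Hx. exists U; auto.
Qed.

Theorem mainTheorem5 (X : Type) (t1 t2 : (X -> Prop) -> Prop) :
  is_topology t1 -> is_topology t2 ->
  BHausdorff (Btop t1 t2) ->
  d_sober t1 t2.
Proof.
  intros H1 H2 [HT0 HR] ptt pff (Hp & Hq & Hcons & Htot).
  pose proof (sep1 H1 H2 HR) as S1. pose proof (sep2 H1 H2 HR) as S2.
  assert (Ex : exists x, ~ Wof t1 ptt x /\ ~ Wof t2 pff x).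
  { apply NNPP. intro N.
    destruct (Htot (Wof t1 ptt) (Wof t2 pff) (W_open ptt H1) (W_open pff H2)) as [E|E].
    - intro x. apply NNPP. intro M. apply N. exists x. tauto.
    - rewrite W_false in E; auto; discriminate.
    - rewrite W_false in E; auto; discriminate. }
  destruct Ex as (x & Hx1 & Hx2).
  assert (Dx : dpoint_is t1 t2 ptt pff x).
  { split; intros; [apply (@key X t1 ptt x H1 Hp S1 Hx1) | apply (@key X t2 pff x H2 Hq S2 Hx2)]; auto. }
  exists x. split; auto.
  intros y [Dy1 Dy2]. destruct Dx as [Dx1 Dx2].
  assert (Tt : forall l, Btop t1 t2 l -> (geTT (l x) = true <-> geTT (l y) = true)).
  { intros l [Hl _]. rewrite <- !level_tt. rewrite <- (Dx1 _ Hl), <- (Dy1 _ Hl). tauto. }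
  assert (Tf : forall l, Btop t1 t2 l -> (geFF (l x) = true <-> geFF (l y) = true)).
  { intros l [_ Hl]. rewrite <- !level_ff. rewrite <- (Dx2 _ Hl), <- (Dy2 _ Hl). tauto. }
  apply HT0.
  - unfold Omega, Binf.
    assert (A : dec (forall b, (exists l, Btop t1 t2 l /\ b = Bimp (l y) (l x)) -> geTT b = true) = true).
    { apply dec_true. intros b (l & Hl & ->). unfold Bimp, Bjoin, Bneg. rewrite !geTT_mkB.
      pose proof (Tt l Hl). destruct (geTT (l x)), (geTT (l y)); intuition. }
    assert (C : dec (forall b, (exists l, Btop t1 t2 l /\ b = Bimp (l y) (l x)) -> geFF b = true) = true).
    { apply dec_true. intros b (l & Hl & ->). unfold Bimp, Bjoin, Bneg. rewrite !geFF_mkB.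
      pose proof (Tf l Hl). destruct (geFF (l x)), (geFF (l y)); intuition. }
    rewrite A, C. reflexivity.
  - unfold Omega, Binf.
    assert (A : dec (forall b, (exists l, Btop t1 t2 l /\ b = Bimp (l x) (l y)) -> geTT b = true) = true).
    { apply dec_true. intros b (l & Hl & ->). unfold Bimp, Bjoin, Bneg. rewrite !geTT_mkB.
      pose proof (Tt l Hl). destruct (geTT (l x)), (geTT (l y)); intuition. }
    assert (C : dec (forall b, (exists l, Btop t1 t2 l /\ b = Bimp (l x) (l y)) -> geFF b = true) = true).
    { apply dec_true. intros b (l & Hl & ->). unfold Bimp, Bjoin, Bneg. rewrite !geFF_mkB.
      pose proof (Tf l Hl). destruct (geFF (l x)), (geFF (l y)); intuition. }
    rewrite A, C. reflexivity.
Qed.
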